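(* Let $\prec$ be an exchangeable random total order on $\mathbb{I}_0=\{a_1,b_1,a_2,b_2,\dots\}$ and let $d$ be the associated function defined below. If $x,y \in \mathbb{I}_0$ with $x \ne y$, then $d(x,y) > 0$ almost surely. Therefore almost surely $d$ is a metric on $\mathbb{I}_0$.
   Context: $\mathbb{I}_0 := \bigcup_{n\in\mathbb{N}}\{a_n,b_n\}$ (all symbols distinct). A random total order $\prec$ on $\mathbb{I}_0$ is a map from the probability space to total orders on $\mathbb{I}_0$ such that $\mathbf{1}\{x\prec y\}$ is a random variable for all $x,y$. It is exchangeable if for every $n\in\mathbb{N}$ and all permutations $\sigma,\tau$ of $\{1,\dots,n\}$ the induced order $\prec^n$ on $\bigcup_{k=1}^n\{a_k,b_k\}$ has the same distribution as $\prec^n_{\sigma,\tau}$, defined by: $a_{\sigma(i)}\prec^n_{\sigma,\tau}b_{\tau(j)}$ iff $a_i\prec^n b_j$; $b_{\tau(i)}\prec^n_{\sigma,\tau}a_{\sigma(j)}$ iff $b_i\prec^n a_j$; $a_{\sigma(i)}\prec^n_{\sigma,\tau}a_{\sigma(j)}$ iff $a_i\prec^n a_j$; $b_{\tau(i)}\prec^n_{\sigma,\tau}b_{\tau(j)}$ iff $b_i\prec^n b_j$. Define $d:\mathbb{I}_0\times\mathbb{I}_0\to[0,1]$ by $d(x,x)=0$, $d(x,y)=d(y,x)$, and for $x\prec y$: \[ d(x,y) := \limsup_{n\to\infty}\frac{1}{2n}\#\{1\le k\le n: x\prec a_k\prec y\} + \limsup_{n\to\infty}\frac{1}{2n}\#\{1\le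 \ell\le n: x\prec b_\ell\prec y\}. \] *)

(* Defs.v *)
From HB Require Import structures.
From mathcomp Require Import all_boot all_order all_algebra all_fingroup.
From mathcomp Require Import all_classical all_reals all_analysis.
Set Implicit Arguments. Unset Strict Implicit. Unset Printing Implicit Defensive.
Import Order.TTheory GRing.Theory Num.Theory.
Local Open Scope classical_set_scope.
Local Open Scope ring_scope.

(* I_0 = { a_k, b_k : k in N }.  An element is (c, k) with c = false for a_k
   and c = true for b_k.  Indices are 0-based: a_0, a_1, ... *)
Definition I0 := (bool * nat)%type.
Definition a_ (k : nat) : I0 := (false, k).
Definition b_ (k : nat) : I0 := (true, k).

Definition strict_total_order (r : I0 -> I0 -> bool) : Prop :=
  (forall x, ~~ r x x) /\
  (forall x y z, r x y -> r y z -> r x z) /\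
  (forall x y, x <> y -> r x y \/ r y x).

Definition random_total_order d (T : measurableType d)
    (ord : T -> I0 -> I0 -> bool) : Prop :=
  (forall w, strict_total_order (ord w)) /\
  (forall x y, measurable [set w | ord w x y]).

Definition embI n (u : bool * 'I_n) : I0 := (u.1, nat_of_ord u.2).

Definition relabel n (s t : 'S_n) (u : bool * 'I_n) : bool * 'I_n :=
  (u.1, if u.1 then t u.2 else s u.2).

Definition induced_order n (r : I0 -> I0 -> bool) : bool * 'I_n -> bool * 'I_n -> bool :=
  fun u v => r (embI u) (embI v).

(* The order ≺^n_{σ,τ}: relabel(u) ≺_{σ,τ} relabel(v) iff u ≺^n v. *)
Definition permuted_order n (s t : 'S_n) (r : I0 -> I0 -> bool)
    : bool * 'I_n -> bool * 'I_n -> bool :=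
  fun u v => @induced_order n r (relabel (s^-1)%g (t^-1)%g u) (relabel (s^-1)%g (t^-1)%g v).

Definition exchangeable d (T : measurableType d) (R : realType)
    (P : probability T R) (ord : T -> I0 -> I0 -> bool) : Prop :=
  forall (n : nat) (s t : 'S_n) (A : set (bool * 'I_n -> bool * 'I_n -> bool)),
    P [set w | A (@induced_order n (ord w))] =
    P [set w | A (permuted_order s t (ord w))].

(* #{ 1 <= k <= n : x ≺ a_k ≺ y } with 0-based indexing: k < n. *)
Definition count_between (r : I0 -> I0 -> bool) (c : bool) (x y : I0) (n : nat) : nat :=
  #|[set k : 'I_n | r x (c, nat_of_ord k) && r (c, nat_of_ord k) y]|.

(* limsup_n (1/(2n)) #{...}; the sequence is indexed from n = 1 (shift by one). *)
Definition half_density (R : realType) (r : I0 -> I0 -> bool) (c : bool) (x y : I0) : R :=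
  limn_sup (fun n : nat => (count_between r c x y n.+1)%:R / (2 * (n.+1)%:R) : R).

Definition dist_ord (R : realType) (r : I0 -> I0 -> bool) (x y : I0) : R :=
  half_density R r false x y + half_density R r true x y.

Definition dfun (R : realType) (r : I0 -> I0 -> bool) (x y : I0) : R :=
  if x == y then 0 else if r x y then dist_ord R r x y else dist_ord R r y x.

Definition is_metric (R : realType) (dd : I0 -> I0 -> R) : Prop :=
  (forall x y, 0 <= dd x y) /\
  (forall x y, dd x y = 0 <-> x = y) /\
  (forall x y, dd x y = dd y x) /\
  (forall x y z, dd x z <= dd x y + dd y z).

(* Main.v *)
Require Import Defs.
From HB Require Import structures.
From mathcomp Require Import all_boot all_order all_algebra all_fingroup.
From mathcomp Require Import all_classical all_reals all_analysis.
From mathcomp Require Import lra zify.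
From Stdlib Require Import Lia.
Import Order.TTheory GRing.Theory Num.Theory.
Local Open Scope classical_set_scope.
Local Open Scope ring_scope.

Set Implicit Arguments. Unset Strict Implicit. Unset Printing Implicit Defensive.

Local Close Scope classical_set_scope.
Local Open Scope set_scope.
Definition betw (r : I0 -> I0 -> bool) (p q z : I0) : bool :=
  (r p z && r z q) || (r q z && r z p).

Definition Bc (r : I0 -> I0 -> bool) (c : bool) (p q : I0) (n : nat) : nat :=
  #|[set k : 'I_n | betw r p q (c, nat_of_ord k)]%SET|.

Section Det.
Variable r : I0 -> I0 -> bool.
Hypothesis hr : strict_total_order r.

Lemma r_irr x : ~~ r x x. Proof. by case: hr. Qed.
Lemma r_trans x y z : r x y -> r y z -> r x z. Proof. by case: hr => _ [H _]; apply: H. Qed.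
Lemma r_tot x y : x <> y -> r x y \/ r y x. Proof. by case: hr => _ [_ H]; apply: H. Qed.
Lemma r_asym x y : r x y -> r y x -> False.
Proof. by move=> h1 h2; have := r_irr x; rewrite (r_trans h1 h2). Qed.

Lemma Bc_sym c p q n : Bc r c p q n = Bc r c q p n.
Proof. by rewrite /Bc; apply: eq_card => k; rewrite !inE /betw orbC. Qed.

Lemma Bc_le c p q n : (Bc r c p q n <= n)%N.
Proof. by rewrite /Bc; apply: leq_trans (max_card _) _; rewrite card_ord. Qed.

Lemma Bc_tri c p q s n : (Bc r c p q n <= Bc r c p s n + Bc r c s q n + 1)%N.
Proof.
rewrite /Bc.
set S1 := [set k : 'I_n | betw r p s (c, nat_of_ord k)].
set S2 := [set k : 'I_n | betw r s q (c, nat_of_ord k)].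
set S3 := [set k : 'I_n | (c, nat_of_ord k) == s].
have h3 : (#|S3| <= 1)%N.
  apply/card_le1_eqP => k1 k2; rewrite !inE => /eqP h1 /eqP h2.
  by apply: val_inj; rewrite /= -h2 in h1; case: h1.
apply: (@leq_trans #|S1 :|: S2 :|: S3|).
  apply: subset_leq_card; apply/fintype.subsetP => k; rewrite !inE /betw.
  case: (eqVneq (c, nat_of_ord k) s) => [->|hne]; first by rewrite orbT.
  move=> H; rewrite orbF.
  have hne' : s <> (c, nat_of_ord k) by move=> h; move: hne; rewrite h eqxx.
  by have [hs|hs] := r_tot hne'; case/orP: H => /andP[h1 h2]; rewrite h1 h2 hs /= ?orbT.
apply: (leq_trans (leq_card_setU _ _)); rewrite leq_add //.
exact: leq_card_setU.
Qed.

Lemma below_few c y n m :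
  (#|[set k : 'I_n | r (c, nat_of_ord k) y && (Bc r c (c, nat_of_ord k) y n <= m)]| <= m.+1)%N.
Proof.
set S := [set k : 'I_n | _].
have [->|[u0 Hu0]] := set_0Vmem S; first by rewrite cards0.
pose rk (v : 'I_n) := #|[set v' in S | r (c, nat_of_ord v') (c, nat_of_ord v)]|.
case: (@arg_minnP _ u0 (mem S) rk Hu0) => u Su Hmin.
have {}Su : u \in S by exact: Su.
rewrite (cardsD1 u) Su add1n ltnS.
move: (Su); rewrite inE => /andP[ruy hm].
apply: leq_trans hm; apply: subset_leq_card; apply/fintype.subsetP => v.
move=> /setD1P [hvu Sv].
have rvy : r (c, nat_of_ord v) y by move: (Sv); rewrite inE => /andP[-> _].
rewrite inE.
rewrite /betw rvy andbT.
have hne : (c, nat_of_ord u) <> (c, nat_of_ord v).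
  by case=> h; move: hvu; rewrite (val_inj h) eqxx.
have [h|hvu'] := r_tot hne; first by rewrite h.
exfalso; have := Hmin v Sv; rewrite leqNgt => /negP; apply.
apply: proper_card; apply/properP; split.
  apply/fintype.subsetP => z; rewrite !inE => /andP[-> hz] /=.
  exact: r_trans hz hvu'.
exists v; first by rewrite inE Sv hvu'.
by rewrite inE (negbTE (r_irr _)) andbF.
Qed.
End Det.

Lemma flip_sto r : strict_total_order r -> strict_total_order (fun a b => r b a).
Proof.
move=> hr; split; first by move=> x; apply: r_irr.
split; first by move=> x y z h1 h2; apply: r_trans h2 h1.
by move=> x y h; case: (r_tot hr h); auto.
Qed.

Lemma Bc_flip r c p q n : Bc (fun a b => r b a) c p q n = Bc r c p q n.
Proof. by rewrite /Bc; apply: eq_card => k; rewrite !inE /betw orbC andbC [in X in _ || X]andbC. Qed.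

Lemma few_close r (hr : strict_total_order r) c y n m :
  (#|[set k : 'I_n | ((c, nat_of_ord k) != y) && (Bc r c (c, nat_of_ord k) y n <= m)]| <= (m.+1).*2)%N.
Proof.
rewrite -addnn.
apply: leq_trans (leq_add (below_few hr c y n m) (below_few (flip_sto hr) c y n m)).
apply: leq_trans (leq_card_setU _ _); apply: subset_leq_card; apply/fintype.subsetP => k.
rewrite !inE Bc_flip => /andP[hne ->]; rewrite !andbT.
have hne' : (c, nat_of_ord k) <> y by apply/eqP.
by have [->|->] := r_tot hr hne'; rewrite ?orbT.
Qed.
Lemma cb_eq r c x y n : count_between r c x y n = #|[set k : 'I_n | r x (c, nat_of_ord k) && r (c, nat_of_ord k) y]%SET|.
Proof. by apply: eq_card => k; rewrite inE unfold_in /in_set asboolb. Qed.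

Local Open Scope classical_set_scope.
Local Open Scope ring_scope.

Section Lim.
Variable R : realType.
Implicit Types u v : R^o^nat.

Lemma bounded_of u (M : R) : (forall n, `|u n| <= M) -> bounded_fun u.
Proof.
move=> hM; exists M; split; first exact: num_real.
by move=> x hx t _ /=; apply: le_trans (hM t) (ltW hx).
Qed.

Lemma sups_ge u n : bounded_fun u -> u n <= sups u n.
Proof.
move=> bu; apply: ub_le_sup; last by exists n => /=.
exact/has_ubound_sdrop/bounded_fun_has_ubound.
Qed.

Lemma limsup_ge0 u : bounded_fun u -> (forall n, 0 <= u n) -> 0 <= limn_sup u.
Proof.
move=> bu u0; rewrite limn_supE //; apply: lb_le_inf; first by exists (sups u 0), 0%N.
move=> _ [n _ <-]; apply: le_trans (u0 n) _; exact: sups_ge.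
Qed.

Lemma limsup_le u v : bounded_fun u -> bounded_fun v -> (forall n, u n <= v n) ->
  limn_sup u <= limn_sup v.
Proof.
move=> bu bv uv; rewrite !limn_supE //; apply: lb_le_inf; first by exists (sups v 0), 0%N.
move=> _ [n _ <-].
apply: (@le_trans _ _ (sups u n)).
  by apply: ge_inf; [exact: bounded_fun_has_lbound_sups | exists n].
apply: ge_sup; first by exists (u n), n => /=.
move=> _ [k /= hk <-]; apply: le_trans (uv k) _.
apply: ub_le_sup; last by exists k.
exact/has_ubound_sdrop/bounded_fun_has_ubound.
Qed.

Lemma limsup_lt u (e : R) : bounded_fun u -> limn_sup u < e ->
  exists N, forall n, (N <= n)%N -> u n < e.
Proof.
move=> bu; rewrite limn_supE // => /inf_lt[]; first by exists (sups u 0), 0%N.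
move=> _ [N _ <-] hN; exists N => n hn; apply: le_lt_trans hN.
apply: ub_le_sup; last by exists n.
exact/has_ubound_sdrop/bounded_fun_has_ubound.
Qed.

Lemma limsup_harmonic : limn_sup (harmonic : R^o^nat) = 0.
Proof.
rewrite cvg_limn_supE; last by apply/cvg_ex; exists 0; exact: cvg_harmonic.
by apply/cvg_lim; [exact: Rhausdorff | exact: cvg_harmonic].
Qed.

Lemma bounded_harmonic : bounded_fun (harmonic : R^o^nat).
Proof.
apply: (@bounded_of _ 1) => n /=; rewrite ger0_norm ?invr_ge0 //.
by rewrite invr_le1 // ?ler1n // ?ltr0n // unitfE pnatr_eq0.
Qed.

Lemma limsup_cst0 : limn_sup (fun _ : nat => 0 : R^o) = 0.
Proof.
rewrite cvg_limn_supE; last by apply: is_cvg_cst.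
exact: lim_cst.
Qed.
End Lim.

Section G.
Variable R : realType.
Variable r : I0 -> I0 -> bool.
Hypothesis hr : strict_total_order r.

Definition sq c p q : R^o^nat := fun n => (Bc r c p q n.+1)%:R / (2 * (n.+1)%:R).
Definition G c p q : R := limn_sup (sq c p q).

Lemma sq_ge0 c p q n : 0 <= sq c p q n.
Proof. by rewrite /sq divr_ge0 // mulr_ge0. Qed.

Lemma sq_le1 c p q n : sq c p q n <= 1.
Proof.
rewrite /sq ler_pdivrMr ?mulr_gt0 ?ltr0n // mul1r.
apply: (@le_trans _ _ (n.+1)%:R); first by rewrite ler_nat Bc_le.
by rewrite ler_peMl // ler1n.
Qed.

Lemma sq_bounded c p q : bounded_fun (sq c p q).
Proof. by apply: (@bounded_of _ _ 1) => n; rewrite ger0_norm ?sq_ge0 ?sq_le1. Qed.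

Lemma G_ge0 c p q : 0 <= G c p q.
Proof. exact: limsup_ge0 (sq_bounded _ _ _) (@sq_ge0 c p q). Qed.

Lemma G_sym c p q : G c p q = G c q p.
Proof. by rewrite /G /sq; congr limn_sup; apply: funext => n; rewrite Bc_sym. Qed.

Lemma G_tri c p q s : G c p q <= G c p s + G c s q.
Proof.
have b1 := sq_bounded c p s; have b2 := sq_bounded c s q.
apply: (@le_trans _ _ (limn_sup ((sq c p s \+ sq c s q) \+ harmonic))).
  apply: limsup_le; [exact: sq_bounded| |].
    by apply: bounded_funD; [exact: bounded_funD|exact: (@bounded_harmonic R)].
  move=> n; rewrite /sq /= -!mulrDl.
  apply: (@le_trans _ _ (((Bc r c p s n.+1) + (Bc r c s q n.+1))%:R / (2 * n.+1%:R) + 1 / (2 * n.+1%:R))).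
    rewrite -mulrDl ler_pM2r ?invr_gt0 ?mulr_gt0 ?ltr0n // natr1.
    by rewrite ler_nat -[X in (_ <= X)%N]addn1; apply: Bc_tri.
  by rewrite natrD lerD2l /= mul1r invfM ler_piMl // ?invr_ge0 // invf_le1 // ler1n.
have := le_limn_supD (bounded_funD b1 b2) (@bounded_harmonic R).
move=> h; apply: le_trans h _; rewrite limsup_harmonic addr0; exact: (le_limn_supD b1 b2).
Qed.

Lemma Bc_cb c p q n : r p q -> count_between r c p q n = Bc r c p q n.
Proof.
move=> hpq; rewrite cb_eq /Bc; apply: eq_card => k; rewrite !inE /betw.
case h: (r q (c, nat_of_ord k) && r (c, nat_of_ord k) p); rewrite ?orbF //.
case/andP: h => h1 h2; exfalso; have h3 := r_trans hr h1 h2; exact: (r_asym hr h3 hpq).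
Qed.

Lemma Bc_diag c p n : Bc r c p p n = 0%N.
Proof.
apply/eqP; rewrite cards_eq0; apply/eqP/setP => k; rewrite !inE /betw orbb.
apply/negbTE/negP => /andP[h1 h2]. exact: (@r_asym r hr _ _ h1 h2).
Qed.

Lemma dfun_G p q : dfun R r p q = G false p q + G true p q.
Proof.
rewrite /dfun; case: eqP => [<-|hne].
  rewrite /G /sq.
  have E c : (fun n => (Bc r c p p n.+1)%:R / (2 * n.+1%:R) : R^o) = fun=> 0.
    by apply: funext => n; rewrite Bc_diag mul0r.
  by rewrite !E limsup_cst0 addr0.
rewrite /dist_ord /half_density.
case: ifP => h.
  rewrite /G /sq; congr (limn_sup _ + limn_sup _); apply: funext => n; by rewrite Bc_cb.
rewrite (G_sym false) (G_sym true).
have h' : r q p by case: (r_tot hr hne) => //; rewrite h.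
rewrite /G /sq; congr (limn_sup _ + limn_sup _); apply: funext => n; by rewrite Bc_cb.
Qed.
End G.

Lemma metric_of (R : realType) r (hr : strict_total_order r)
  (hpos : forall x y, x <> y -> 0 < dfun R r x y) : is_metric (dfun R r).
Proof.
split; first by move=> x y; rewrite (dfun_G _ hr) addr_ge0 ?G_ge0.
split.
  move=> x y; split; last by move=> ->; rewrite /dfun eqxx.
  move=> h; apply: contrapT => hne; have := hpos _ _ hne; by rewrite h ltxx.
split; first by move=> x y; rewrite !(dfun_G _ hr) (G_sym _ _ false x) (G_sym _ _ true x).
move=> x y z; rewrite !(dfun_G _ hr) addrACA.
by apply: lerD; apply: (G_tri _ hr).
Qed.

Section Meas.
Variables (d : measure_display) (T : measurableType d).
Variable ord : T -> I0 -> I0 -> bool.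
Hypothesis hm : forall x y, measurable [set w | ord w x y].

Lemma measJ (J : finType) (e : J -> I0 * I0) (Q : (J -> bool) -> Prop) :
  measurable [set w | Q (fun j => ord w (e j).1 (e j).2)].
Proof.
pose Gs (g : {ffun J -> bool}) := \bigcap_k (match @unpickle J k with
   Some j => [set w | ord w (e j).1 (e j).2 = g j] | None => setT end).
pose F k := match @unpickle {ffun J -> bool} k with
   Some g => if `[< Q g >] then Gs g else set0 | None => set0 end.
suff -> : [set w | Q (fun j => ord w (e j).1 (e j).2)] = \bigcup_k F k.
  apply: bigcupT_measurable => k; rewrite /F; case: unpickle => [g|]; last exact: measurable0.
  case: asboolP => _; last exact: measurable0.
  apply: bigcapT_measurable => k'; case: unpickle => [j|]; last exact: measurableT.
  case: (g j); first exact: hm.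
  rewrite (_ : [set w | _ = false] = ~` [set w | ord w (e j).1 (e j).2]).
    exact: measurableC.
  by apply/seteqP; split => w /=; case: (ord w _ _).
apply/seteqP; split => w /=.
  move=> hq; exists (pickle [ffun j => ord w (e j).1 (e j).2]) => //.
  rewrite /F pickleK.
  have E : fun_of_fin [ffun j => ord w (e j).1 (e j).2] = (fun j => ord w (e j).1 (e j).2).
    by apply: funext => j; rewrite ffunE.
  case: asboolP => [_|hn]; last by exfalso; apply: hn; rewrite E.
  by move=> k _; case: unpickle => [j|] //=; rewrite ffunE.
move=> [k _]; rewrite /F; case: unpickle => [g|] //; case: asboolP => // hq Hg.
have E : (fun j => ord w (e j).1 (e j).2) = (fun j => g j).
  by apply: funext => j; have := Hg (pickle j) I; rewrite pickleK.
by rewrite E.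
Qed.

Lemma measB c p q n (Q : nat -> Prop) : measurable [set w | Q (Bc (ord w) c p q n)].
Proof.
pose ep (z : 'I_n + bool) : I0 := match z with inl k => (c, nat_of_ord k) | inr b => if b then q else p end.
pose e (j : ('I_n + bool) * ('I_n + bool)) := (ep j.1, ep j.2).
exact: (measJ e (fun h => Q #|[set k : 'I_n | (h (inr false, inl k) && h (inl k, inr true)) || (h (inr true, inl k) && h (inl k, inr false))]%SET|)).
Qed.
End Meas.

Lemma exch_swap d (T : measurableType d) (R : realType) (P : probability T R)
  (ord : T -> I0 -> I0 -> bool) (hex : exchangeable P ord) n c (k k' : 'I_n)
  (yv : bool * 'I_n) (hk : (c, k) != yv) (hk' : (c, k') != yv) (Phi : nat -> Prop) :
  P [set w | Phi (Bc (ord w) c (c, nat_of_ord k) (embI yv) n)] =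
  P [set w | Phi (Bc (ord w) c (c, nat_of_ord k') (embI yv) n)].
Proof.
pose pi := tperm k k'.
pose s : 'S_n := if c then 1%g else pi.
pose t : 'S_n := if c then pi else 1%g.
pose Bf (g : bool * 'I_n -> bool * 'I_n -> bool) (u v : bool * 'I_n) :=
  #|[set j : 'I_n | (g u (c, j) && g (c, j) v) || (g v (c, j) && g (c, j) u)]%SET|.
have := hex n s t (fun g => Phi (Bf g (c, k) yv)).
have hrel j : relabel (s^-1)%g (t^-1)%g (c, j) = (c, pi j).
  by rewrite /relabel /s /t; case: (c) => /=; rewrite tpermV.
have hy : relabel (s^-1)%g (t^-1)%g yv = yv.
  case: yv hk hk' => b jy hk hk'; rewrite /relabel /s /t /=.
  case: (eqVneq b c) => [hbc|hbc].
    have h1 : k != jy by apply: contra_neq hk => ->; rewrite hbc.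
    have h2 : k' != jy by apply: contra_neq hk' => ->; rewrite hbc.
    by rewrite hbc; case: (c); rewrite /= tpermV tpermD.
  by case: (b) (c) hbc => [] [] //= _; rewrite invg1 perm1.
have E2 w : Bf (permuted_order s t (ord w)) (c, k) yv = Bc (ord w) c (c, nat_of_ord k') (embI yv) n.
  rewrite /Bf /Bc -(card_preimset _ (@perm_inj _ pi)).
  apply: eq_card => j; rewrite !inE /permuted_order /induced_order hrel hrel hy tpermL /betw.
  by rewrite /pi tpermK.
move=> H; rewrite [LHS]H; congr (P _); apply/seteqP; split => w /=; by rewrite E2.
Qed.

Lemma prob_fin d (T : measurableType d) (R : realType) (P : probability T R) (A : set T) :
  measurable A -> (fine (P A))%:E = P A /\ 0 <= fine (P A).
Proof.
move=> mA; have h : P A \is a fin_num.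
  rewrite ge0_fin_numE ?measure_ge0 //; apply: le_lt_trans (probability_le1 P mA) _.
  exact: ltry.
by split; [exact: fineK | rewrite fine_ge0 ?measure_ge0].
Qed.

Lemma card_ne n c (yv : bool * 'I_n) : (n.-1 <= #|[set k : 'I_n | (c, k) != yv]%SET|)%N.
Proof.
have h : (#|~: [set k : 'I_n | (c, k) != yv]%SET| <= 1)%N.
  apply/card_le1_eqP => k1 k2; rewrite !inE !negbK => /eqP h1 /eqP h2.
  by rewrite -h2 in h1; case: h1.
have := cardsC [set k : 'I_n | (c, k) != yv]%SET; rewrite card_ord => hn.
have : (n <= #|[set k : 'I_n | (c, k) != yv]%SET| + 1)%N.
  by rewrite -[X in (X <= _)%N]hn leq_add2l.
by move=> h2; rewrite -subn1 leq_subLR addnC.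
Qed.

Lemma prob_bound d (T : measurableType d) (R : realType) (P : probability T R)
  (ord : T -> I0 -> I0 -> bool) (hro : random_total_order ord) (hex : exchangeable P ord)
  n c (i : 'I_n) (yv : bool * 'I_n) (hi : (c, i) != yv) m :
  (n.-1)%:R * fine (P [set w | (Bc (ord w) c (c, nat_of_ord i) (embI yv) n <= m)%N])
    <= (2 * m.+1)%:R.
Proof.
case: hro => hto hm.
set E := [set w | _].
have mE : measurable E by exact: (@measB _ _ _ hm _ _ _ _ (fun z => (z <= m)%N)).
pose Ek (k : 'I_n) := [set w | ((c, k) != yv) /\ (Bc (ord w) c (c, nat_of_ord k) (embI yv) n <= m)%N].
have mEk k : measurable (Ek k) by exact: (@measB _ _ _ hm _ _ _ _ (fun z => ((c, k) != yv) /\ (z <= m)%N)).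
have [pE p0] := prob_fin P mE; set p := fine (P E) in pE p0 *.
have hP k : P (Ek k) = (if (c, k) != yv then p else 0)%:E.
  case: ifP => h.
    rewrite pE (_ : Ek k = [set w | (Bc (ord w) c (c, nat_of_ord k) (embI yv) n <= m)%N]).
      exact: (exch_swap hex h hi (fun z => (z <= m)%N)).
    by apply/seteqP; split => w /= [].
  rewrite (_ : Ek k = set0) ?measure0 //.
  by apply/seteqP; split => w //= []; rewrite h.
have hsum : (\sum_(k : 'I_n) P (Ek k) <= ((2 * m.+1)%:R)%:E)%E.
  have -> : (\sum_(k : 'I_n) P (Ek k) = \sum_(k : 'I_n) \int[P]_(w in setT) (\1_(Ek k) w)%:E)%E.
    by apply: eq_bigr => k _; rewrite integral_indic // setIT.
  rewrite -ge0_integral_sum //; last first.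
    move=> k; apply/measurable_realfun.measurable_EFinP; exact: measurable_realfun.measurable_indic.
  apply: (@le_trans _ _ (\int[P]_(w in setT) (cst ((2 * m.+1)%:R)%:E w))%E); last first.
    rewrite integral_cst // [X in (_ * X <= _)%E](_ : _ = 1%E) ?mule1 //; exact: probability_setT.
  apply: ge0_le_integral => //.
  - by move=> w _; apply: sume_ge0 => k _; rewrite lee_fin indicE.
  - apply: emeasurable_sum => k; apply/measurable_realfun.measurable_EFinP.
    exact: measurable_realfun.measurable_indic.
  - move=> w _; rewrite sumEFin lee_fin /=.
    have -> : \sum_(k : 'I_n) (\1_(Ek k) w : R) = #|[set k : 'I_n | (w \in Ek k)]%SET|%:R.
      rewrite -sum1_card natr_sum [RHS]big_mkcond /=; apply: eq_bigr => k _.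
      by rewrite inE indicE; case: (w \in Ek k).
    rewrite ler_nat mul2n.
    apply: leq_trans (few_close (hto w) c (embI yv) n m).
    apply: subset_leq_card; apply/fintype.subsetP => k; rewrite !inE.
    move=> [h1 ->]; rewrite andbT; apply: contra_neq h1 => -[hb hj].
    by rewrite [yv]surjective_pairing -hb; congr pair; exact: val_inj.
move: hsum; have -> : (\sum_(k : 'I_n) P (Ek k) = (p *+ #|[set k : 'I_n | (c, k) != yv]%SET|)%:E)%E.
  rewrite (eq_bigr _ (fun k _ => hP k)) sumEFin -big_mkcond /= sumr_const.
  by congr (_ *+ _)%:E; apply: eq_card => k; rewrite inE.
rewrite lee_fin; apply: le_trans.
rewrite -[p *+ _]mulr_natl; apply: ler_wpM2r => //; rewrite ler_nat; exact: card_ne.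
Qed.

Section Main.
Variables (d : measure_display) (T : measurableType d) (R : realType).
Variables (P : probability T R) (ord : T -> I0 -> I0 -> bool).
Hypothesis hro : random_total_order ord.
Hypothesis hex : exchangeable P ord.

Lemma real_step (n K m : nat) (p : R) : 0 <= p ->
  n%:R * p <= (2 * m.+1)%:R -> (m * K.+1 <= 2 * n.+1)%N -> (2 * K + 6 <= n)%N ->
  p <= 5 / K.+1%:R.
Proof.
move=> p0 h1 h2 h3.
have kr0 : 0 < K.+1%:R :> R by rewrite ltr0n.
rewrite ler_pdivlMr //.
have h2' : m%:R * K.+1%:R <= 2 * (n%:R + 1) :> R.
  by move: h2; rewrite -(ler_nat R) !natrM -[n.+1%:R]natr1.
have h3' : 2 * K%:R + 6 <= n%:R :> R.
  by move: h3; rewrite -(ler_nat R) natrD natrM.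
have h1' : n%:R * p * K.+1%:R <= 2 * (m%:R + 1) * K.+1%:R :> R.
  apply: ler_wpM2r; first exact: ltW.
  by rewrite (le_trans h1) // natrM natr1.
have hn : 0 < n%:R :> R by rewrite ltr0n; apply: leq_trans h3; rewrite addnS.
have hK : K.+1%:R = K%:R + 1 :> R by rewrite natr1.
suff : n%:R * (p * K.+1%:R) <= n%:R * 5 by rewrite ler_pM2l.
rewrite hK in h1' h2' *.
nra.
Qed.

Lemma G_le0 r (hr : strict_total_order r) c p q :
  dfun R r p q <= 0 -> G R r c p q <= 0.
Proof.
rewrite (dfun_G R hr) => h.
have := G_ge0 R r false p q; have := G_ge0 R r true p q.
by case: c => h1 h2; lra.
Qed.

Lemma pos_ae x y : x <> y -> {ae P, forall w, 0 < dfun R (ord w) x y}.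
Proof.
case: hro => hto hm.
move: x y => [c i] [b j] hxy.
pose N0 := (maxn i j).+1.
pose E' (K n : nat) := [set w | sq R (ord w) c (c, i) (b, j) n < (K.+1%:R)^-1].
have mE' K n : measurable (E' K n).
  exact: (@measB _ _ _ hm c (c, i) (b, j) n.+1 (fun z => z%:R / (2 * n.+1%:R) < K.+1%:R^-1)).
pose F K N := \bigcap_l E' K (l + N)%N.
pose U K := \bigcup_N F K N.
pose M := \bigcap_K U K.
have mF K N : measurable (F K N) by apply: bigcapT_measurable.
have mU K : measurable (U K) by apply: bigcupT_measurable.
have mM : measurable M by apply: bigcapT_measurable.
have bE K n : (N0 + 2 * K + 6 <= n)%N -> (P (E' K n) <= (5 / K.+1%:R)%:E)%E.
  move=> hn.
  have hi : (i < n.+1)%N by rewrite /N0 in hn; lia.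
  have hj : (j < n.+1)%N by rewrite /N0 in hn; lia.
  pose iv := Ordinal hi; pose yv := (b, Ordinal hj) : bool * 'I_n.+1.
  have hiy : (c, iv) != yv.
    by apply/eqP => -[hc hij]; apply: hxy; rewrite hc hij.
  pose m := ((2 * n.+1) %/ K.+1)%N.
  have := prob_bound hro hex hiy m.
  set S := [set w | _] => hb.
  have mS : measurable S by exact: (@measB _ _ _ hm _ _ _ _ (fun z => (z <= m)%N)).
  have sub : E' K n `<=` S.
    move=> w /= hw; rewrite /S /= leq_divRL //; apply: ltnW.
    move: hw; rewrite /E' /sq /= ltr_pdivrMr ?mulr_gt0 ?ltr0n // mulrC ltr_pdivlMr ?ltr0n //.
    by rewrite -natrM -natrM ltr_nat.
  apply: le_trans (le_measure _ _ _ sub) _; rewrite ?inE //.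
  have [pS p0] := prob_fin P mS.
  suff h : ((fine (P S))%:E <= (5 / K.+1%:R)%:E)%E by move: h; rewrite pS.
  rewrite lee_fin; apply: (real_step p0 hb).
    by rewrite /m leq_trunc_div.
  by move: hn; rewrite /N0; lia.
have bF K N : (P (F K N) <= (5 / K.+1%:R)%:E)%E.
  apply: le_trans (bE K (N0 + 2 * K + 6 + N) _); last by rewrite leq_addr.
  apply: le_measure; rewrite ?inE //.
  by move=> w hw; exact: (hw (N0 + 2 * K + 6) I).
have bU K : (P (U K) <= (5 / K.+1%:R)%:E)%E.
  have hh : {homo F K : N N' / (N <= N')%N >-> (N <= N')%O}.
    move=> N N' hNN'; rewrite subsetEset => w hw l _.
    by have := hw (l + (N' - N))%N I; rewrite -addnA subnK.
  have hc' := @nondecreasing_cvg_mu _ _ _ P (F K) (mF K) (mU K) hh.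
  rewrite -(cvg_lim _ hc') //; apply: lime_le.
    by apply/cvg_ex; eexists; exact: hc'.
  by apply: nearW => N; exact: bF.
have M0 : P M = 0%E.
  have [pM p0] := prob_fin P mM.
  suff h : fine (P M) = 0 by rewrite -pM h.
  apply/eqP; rewrite eq_le p0 andbT; apply/negP => /negP; rewrite -ltNge => hp.
  pose K := Num.Def.trunc (5 / fine (P M)).
  have hK := truncnS_gt (5 / fine (P M)).
  have : (P M <= (5 / K.+1%:R)%:E)%E.
    apply: le_trans (bU K); apply: le_measure; rewrite ?inE //.
    by move=> w hw; exact: (hw K I).
  rewrite -pM lee_fin ler_pdivlMr ?ltr0n // => h.
  move: hK; rewrite -/K ltr_pdivrMr // => h2.
  rewrite mulrC in h2; by have := lt_le_trans h2 h; rewrite ltxx.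
exists M; split => // w /= hw K _.
have hd : dfun R (ord w) (c, i) (b, j) <= 0 by rewrite leNgt; apply/negP.
have hG := G_le0 (hto w) c hd.
have := @limsup_lt R (sq R (ord w) c (c, i) (b, j)) (K.+1%:R^-1) (sq_bounded R (ord w) c (c, i) (b, j)).
case.
  by apply: le_lt_trans hG _; rewrite invr_gt0 ltr0n.
move=> N hN; exists N => // l _; rewrite /E' /=; apply: hN; exact: leq_addl.
Qed.

End Main.

Unset Implicit Arguments.

Theorem mainTheorem4 (d : measure_display) (T : measurableType d) (R : realType)
    (P : probability T R) (ord : T -> I0 -> I0 -> bool) :
  random_total_order ord -> exchangeable P ord ->
  (forall x y : I0, x <> y -> {ae P, forall w, 0 < dfun R (ord w) x y}) /\
  {ae P, forall w, is_metric (dfun R (ord w))}.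
Proof.
move=> hro hex; split; first by move=> x y hxy; exact: (pos_ae hro hex hxy).
pose bad (z : I0 * I0) := if z.1 == z.2 then set0 else ~` [set w | 0 < dfun R (ord w) z.1 z.2].
pose B k := match @unpickle (I0 * I0)%type k with Some z => bad z | None => set0 end.
have nB k : P.-negligible (B k).
  rewrite /B; case: unpickle => [[x y]|]; last exact: negligible_set0.
  rewrite /bad /=; case: eqP => [_|hne]; first exact: negligible_set0.
  exact: (pos_ae hro hex hne).
have := negligible_bigcup nB.
apply: negligibleS => w /= hnm.
apply: contrapT => hnot; apply: hnm; apply: (@metric_of R (ord w) (proj1 hro w)) => x y hxy.
apply: contrapT => hpos; apply: hnot; exists (pickle (x, y)) => //.
by rewrite /B pickleK /bad /=; case: eqP.
Qed.
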